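(* Let $(p_i)_{i\ge1}$ be a sequence of integers $p_i\ge 2$ and let $H_k$ be the iterated wreath product $\wr_{i=1}^{k}C_{p_i}$, realized as below. Let $f_{k,k+1}:H_k\to H_{k+1}$ be the injective homomorphism extending an automorphism of the $k$-level tree to the $(k+1)$-level tree by trivial vertex permutations at level $k$. Then the direct limit $\varinjlim H_k$ of the direct system $(H_k,f_{k,k+1})$ has commutator width $1$.
   Context: Let $T_k$ be the rooted tree with levels $0,1,\dots,k$ in which every vertex at level $i-1$ has $p_i$ children labelled $1,\dots,p_i$. $H_k$ is the group of automorphisms of $T_k$ such that at every vertex of level $i-1$ ($1\le i\le k$) the induced permutation of its children is a power of the cycle $(1,2,\dots,p_i)$; this group is isomorphic to the iterated permutational wreath product of the cyclic groups $C_{p_1},\dots,C_{p_k}$. The commutator width $cw(G)$ is the maximum, over elements $g$ of the derived subgroup $G'$, of the least number of commutators whose product is $g$. *)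

(* Defs.v *)
From mathcomp Require Import all_boot all_order all_fingroup.
Set Implicit Arguments. Unset Strict Implicit. Unset Printing Implicit Defensive.

Local Open Scope group_scope.

(* Conventions: [p : nat -> nat] with [p i] = p_{i+1}, the number of children
   of every vertex at level i (levels counted from 0).  A leaf of T_k is a
   sequence (x_0, ..., x_{k-1}) with x_i < p i (child labels are 0..p i - 1
   instead of 1..p_{i+1}).  The vertices of T_k at level i are the prefixes
   of length i of leaves. *)

Section Tree.
Variable p : nat -> nat.

Definition leaf (k : nat) : finType := {dffun forall i : 'I_k, 'I_(p i)}.

Definition same_prefix k (i : 'I_k) (x y : leaf k) : bool :=
  [forall j : 'I_k, (j < i)%N ==> (x j == y j)].

Definition shift k (s : {perm leaf k}) (x : leaf k) (i : 'I_k) : nat :=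
  ((s x i : nat) + (p i - x i)) %% p i.

(* H_k : permutations of the leaves of T_k coming from tree automorphisms
   whose induced permutation of the children of every vertex of level i is a
   power of the cycle (0 1 ... p i - 1): all leaves below a common vertex of
   level i are rotated by the same amount at coordinate i.  (This condition
   also forces s to preserve the tree structure, and every leaf permutation
   induced by such an automorphism satisfies it.) *)
Definition inH k (s : {perm leaf k}) : bool :=
  [forall x, forall y, forall i : 'I_k,
     same_prefix i x y ==> (shift s x i == shift s y i)].

Definition restr k (x : leaf k.+1) : leaf k :=
  finfun (fun i : 'I_k => (x (widen_ord (leqnSn k) i) : 'I_(p i))).
Definition lastc k (x : leaf k.+1) : 'I_(p k) := x ord_max.

Definition fext k (s : {perm leaf k}) : {perm leaf k.+1} :=
  odflt 1 [pick t : {perm leaf k.+1} |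
             [forall x, (restr (t x) == s (restr x)) && (lastc (t x) == lastc x)]].

Fixpoint fiter (d k : nat) : {perm leaf k} -> {perm leaf (d + k)} :=
  match d with
  | 0 => fun s => s
  | d'.+1 => fun s => fext (fiter d' s)
  end.

(* Direct limit of (H_k, f_{k,k+1}), standard construction: a representative
   is a pair (k, s) with s in H_k; two representatives are identified when
   their images at a common level agree. *)
Definition rep : Type := {k : nat & {perm leaf k}}.

Definition in_lim (u : rep) : Prop := inH (tagged u).

(* image of the representative u at level m (meaningful for tag u <= m) *)
Definition lift_to (m : nat) (u : rep) : {perm leaf m} :=
  tagged_as (Tagged (fun n => {perm leaf n}) (1 : {perm leaf m}))
            (Tagged (fun n => {perm leaf n}) (fiter (m - tag u) (tagged u))).

Definition lvl (u v : rep) : nat := maxn (tag u) (tag v).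

Definition lim_eq (u v : rep) : Prop := lift_to (lvl u v) u = lift_to (lvl u v) v.
Definition lim_mul (u v : rep) : rep :=
  Tagged (fun n => {perm leaf n}) (lift_to (lvl u v) u * lift_to (lvl u v) v).
Definition lim_one : rep := Tagged (fun n => {perm leaf n}) (1 : {perm leaf 0}).
Definition lim_comm (u v : rep) : rep :=
  Tagged (fun n => {perm leaf n}) [~ lift_to (lvl u v) u, lift_to (lvl u v) v].

End Tree.

(* The derived subgroup G' consists of the finite
   products of commutators of elements of G (inverses of commutators are
   commutators).  [commutator_width_is ... n] says that the maximum over
   g in G' of the least number of commutators whose product is g equals n. *)
Section CW.
Variables (T : Type) (G : T -> Prop) (eqv : T -> T -> Prop)
          (mul : T -> T -> T) (one : T) (comm : T -> T -> T).

Definition prod_comms (s : seq (T * T)) : T :=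
  foldr (fun a acc => mul (comm a.1 a.2) acc) one s.

Definition is_prod_of_comms (g : T) (m : nat) : Prop :=
  exists s : seq (T * T), size s = m /\ foldr (fun a P => [/\ G a.1, G a.2 & P]) True s
                          /\ eqv g (prod_comms s).

Definition in_derived (g : T) : Prop := G g /\ exists m, is_prod_of_comms g m.

Definition commutator_width_is (n : nat) : Prop :=
  (forall g, in_derived g -> exists m, (m <= n)%N /\ is_prod_of_comms g m) /\
  (exists g, in_derived g /\ forall m, (m < n)%N -> ~ is_prod_of_comms g m).
End CW.

(* Main.v *)
Require Import Defs.
From mathcomp Require Import all_boot all_order all_fingroup.
From mathcomp Require Import zify.
Set Implicit Arguments. Unset Strict Implicit. Unset Printing Implicit Defensive.

Section Dev.
Variable p : nat -> nat.
Hypothesis hp0 : forall i, 0 < p i.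

Local Notation leaf := (leaf p).

Definition getv k (x : leaf k) (n : nat) : nat :=
  match (insub n : option 'I_k) with Some j => nat_of_ord (x j) | None => 0 end.

Lemma getvE k (x : leaf k) (j : 'I_k) : getv x j = x j.
Proof.
rewrite /getv; case: insubP => [u _ e|]; last by rewrite ltn_ord.
by rewrite (val_inj e).
Qed.

Lemma getv_out k (x : leaf k) n : k <= n -> getv x n = 0.
Proof.
rewrite /getv; case: insubP => [u Pu e|//]; rewrite -e; by rewrite leqNgt ltn_ord.
Qed.

Lemma getv_lt k (x : leaf k) n : getv x n < p n.
Proof.
rewrite /getv; case: insubP => [u _ e|]; last by rewrite hp0.
rewrite -e; exact: ltn_ord.
Qed.

Lemma leafP k (x y : leaf k) : (forall n, n < k -> getv x n = getv y n) -> x = y.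
Proof.
move=> h; apply/ffunP => i; apply/val_inj => /=.
by have := h i (ltn_ord i); rewrite !getvE.
Qed.

Definition mk k (f : nat -> nat) : leaf k :=
  finfun (fun i : 'I_k => (Ordinal (ltn_pmod (f i) (hp0 i)) : 'I_(p i))).

Lemma getv_mk k f n : n < k -> getv (mk k f) n = f n %% p n.
Proof.
move=> h; have -> : n = Ordinal h by [].
by rewrite getvE /mk ffunE.
Qed.

Lemma getv_restr k (x : leaf k.+1) n : n < k -> getv (restr x) n = getv x n.
Proof.
move=> h; have -> : n = Ordinal h by [].
by rewrite getvE /restr ffunE -(getvE x (widen_ord (leqnSn k) (Ordinal h))).
Qed.

Lemma getv_last k (x : leaf k.+1) : getv x k = lastc x.
Proof. by rewrite -[k]/(nat_of_ord (@ord_max k)) getvE. Qed.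

Definition joinn k (y : leaf k) (c : nat) : leaf k.+1 :=
  mk k.+1 (fun n => if n < k then getv y n else c).

Lemma getv_joinn_lo k (y : leaf k) c n : n < k -> getv (joinn y c) n = getv y n.
Proof.
move=> h; rewrite getv_mk ?h ?modn_small ?getv_lt //; exact: ltnW.
Qed.

Lemma getv_joinn_k k (y : leaf k) c : getv (joinn y c) k = c %% p k.
Proof. by rewrite getv_mk // ltnn. Qed.

Lemma restr_joinn k (y : leaf k) c : restr (joinn y c) = y.
Proof. by apply: leafP => n h; rewrite getv_restr // getv_joinn_lo. Qed.

Lemma joinn_eta k (x : leaf k.+1) : joinn (restr x) (getv x k) = x.
Proof.
apply: leafP => n; rewrite ltnS leq_eqVlt => /orP [/eqP -> | h].
  by rewrite getv_joinn_k modn_small // getv_lt.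
by rewrite getv_joinn_lo // getv_restr.
Qed.

Lemma joinn_mod k (y : leaf k) c : joinn y (c %% p k) = joinn y c.
Proof.
apply: leafP => n; rewrite ltnS leq_eqVlt => /orP [/eqP -> | h].
  by rewrite !getv_joinn_k modn_mod.
by rewrite !getv_joinn_lo.
Qed.

Lemma joinn_inj k (y y' : leaf k) c c' :
  joinn y c = joinn y' c' -> y = y' /\ c = c' %[mod p k].
Proof.
move=> e; split; first by rewrite -(restr_joinn y c) e restr_joinn.
by rewrite -(getv_joinn_k y c) -(getv_joinn_k y' c') e.
Qed.


Definition agree k (n : nat) (x y : leaf k) := forall j, j < n -> getv x j = getv y j.
Definition shiftn k (s : {perm leaf k}) (x : leaf k) n :=
  (getv (s x) n + (p n - getv x n)) %% p n.

Lemma shiftE k (s : {perm leaf k}) x (i : 'I_k) : shift s x i = shiftn s x i.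
Proof. by rewrite /shift /shiftn !getvE. Qed.

Lemma inHP k (s : {perm leaf k}) :
  inH s <-> (forall x y n, n < k -> agree n x y -> shiftn s x n = shiftn s y n).
Proof.
split.
  move=> /forallP h x y n hn ag.
  have := forallP (forallP (h x) y) (Ordinal hn) => /implyP H.
  have -> : n = Ordinal hn by [].
  rewrite -!shiftE; apply/eqP/H.
  apply/forallP => j; apply/implyP => hj; apply/eqP/val_inj => /=.
  rewrite -!getvE; exact: ag.
move=> h; apply/forallP => x; apply/forallP => y; apply/forallP => i.
apply/implyP => sp; apply/eqP; rewrite !shiftE; apply: h (ltn_ord i) _.
move=> j hj; have hjk : j < k by apply: ltn_trans hj (ltn_ord i).
have := forallP sp (Ordinal hjk) => /implyP /(_ hj) /eqP e.
have := congr1 val e => /= e'.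
by rewrite -[j]/(nat_of_ord (Ordinal hjk)) !getvE.
Qed.

Lemma modn_addsub a b q : a < q -> (a + (b + (q - a))) %% q = b %% q.
Proof.
move=> h; have -> : a + (b + (q - a)) = b + q by lia.
by rewrite modnDr.
Qed.

Lemma getv_shift k (s : {perm leaf k}) x n :
  getv (s x) n = (getv x n + shiftn s x n) %% p n.
Proof.
rewrite /shiftn modnDmr modn_addsub ?getv_lt // modn_small // getv_lt //.
Qed.

Lemma H_agree k (s : {perm leaf k}) x y n :
  inH s -> n <= k -> agree n x y -> agree n (s x) (s y).
Proof.
move=> /inHP hs hn ag j hj.
have hjn : agree j x y by move=> i hi; apply: ag; apply: ltn_trans hi hj.
by rewrite !getv_shift (ag j hj) (hs x y j (leq_trans hj hn) hjn).
Qed.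

Lemma H_agree_inv k (s : {perm leaf k}) x y n :
  inH s -> n <= k -> agree n (s x) (s y) -> agree n x y.
Proof.
move=> /inHP hs hn ag.
suff: forall m, m <= n -> agree m x y by apply.
elim=> [|m IH] hm j hj; first by [].
have agm := IH (ltnW hm).
move: hj; rewrite ltnS leq_eqVlt => /orP [/eqP ->|hj]; last exact: agm.
have := ag m hm; rewrite !getv_shift (hs x y m (leq_trans hm hn) agm).
move/eqP; rewrite eqn_modDr => /eqP.
by rewrite !modn_small ?getv_lt.
Qed.

Lemma shiftnM k (s t : {perm leaf k}) x n :
  shiftn (s * t)%g x n = (shiftn s x n + shiftn t (s x) n) %% p n.
Proof.
rewrite /shiftn permM modnDm.
have h1 := getv_lt x n; have h2 := getv_lt (s x) n.
have -> : getv (s x) n + (p n - getv x n) + (getv (t (s x)) n + (p n - getv (s x) n))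
   = getv (t (s x)) n + (p n - getv x n) + p n by lia.
by rewrite modnDr.
Qed.

Lemma shiftn1 k x n : shiftn (1 : {perm leaf k})%g x n = 0.
Proof.
rewrite /shiftn perm1; have h := getv_lt x n.
by rewrite subnKC ?modnn // ltnW.
Qed.

Lemma Hset_group k : group_set [set s : {perm leaf k} | inH s].
Proof.
apply/group_setP; split.
  rewrite inE; apply/inHP => x y n _ _; by rewrite !shiftn1.
move=> s t; rewrite !inE => /[dup] hs' /inHP hs /[dup] ht' /inHP ht.
apply/inHP => x y n hn ag.
rewrite !shiftnM (hs x y n hn ag) (ht (s x) (s y) n hn) //.
exact: H_agree (ltnW hn) ag.
Qed.

Canonical HG k := Group (Hset_group k).

Lemma inHG k (s : {perm leaf k}) : (s \in HG k) = inH s.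
Proof. by rewrite inE. Qed.


Definition permf (T : finType) (f : T -> T) : {perm T} :=
  odflt 1%g [pick t : {perm T} | [forall x, t x == f x]].

Lemma permfE (T : finType) (f : T -> T) : injective f -> permf f =1 f.
Proof.
move=> fi; rewrite /permf; case: pickP => [t /forallP h x| none]; first exact/eqP/h.
have := none (perm fi); move/negbT/negP; case; apply/forallP => x; by rewrite permE.
Qed.

Lemma fextE k (s : {perm leaf k}) x : fext s x = joinn (s (restr x)) (getv x k).
Proof.
rewrite /fext; case: pickP => [t /forallP h | none].
  have /andP [/eqP e1 /eqP e2] := h x.
  by rewrite -{1}(joinn_eta (t x)) e1 getv_last e2 -getv_last.
have fi : injective (fun x : leaf k.+1 => joinn (s (restr x)) (getv x k)).
  move=> x1 x2 /joinn_inj [/perm_inj e1 e2].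
  rewrite -(joinn_eta x1) -(joinn_eta x2) e1 -(joinn_mod _ (getv x1 k)) e2 joinn_mod //.
have := none (perm fi); move/negbT/negP; case; apply/forallP => y.
rewrite !permE restr_joinn eqxx /=; apply/eqP/val_inj.
rewrite /= -!getv_last getv_joinn_k modn_small //.
exact: getv_lt.
Qed.

Section Res.
Variable k : nat.
Implicit Types (t : {perm leaf k.+1}) (y : leaf k) (x : leaf k.+1).

Definition res t : {perm leaf k} := permf (fun y => restr (t (joinn y 0))).
Definition top t y := shiftn t (joinn y 0) k.

Lemma agree_restr x : agree k x (joinn (restr x) 0).
Proof. by move=> j hj; rewrite getv_joinn_lo // getv_restr. Qed.

Lemma agree_restrE x x' : agree k x x' -> restr x = restr x'.
Proof. by move=> ag; apply: leafP => n hn; rewrite !getv_restr // ag. Qed.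

Lemma agree_joinn y y' c c' : agree k (joinn y c) (joinn y' c') -> y = y'.
Proof. by move/agree_restrE; rewrite !restr_joinn. Qed.

Lemma resE t y : inH t -> res t y = restr (t (joinn y 0)).
Proof.
move=> ht; apply: permfE => y1 y2 e.
apply: (@agree_joinn _ _ 0 0); apply: (H_agree_inv ht (leqnSn k)).
by move=> j hj; rewrite -!getv_restr // e.
Qed.

Lemma res_restr t x : inH t -> restr (t x) = res t (restr x).
Proof.
move=> ht; rewrite resE //; apply: agree_restrE; apply: H_agree ht (leqnSn k) _.
exact: agree_restr.
Qed.

Lemma top_restr t x : inH t -> shiftn t x k = top t (restr x).
Proof. by move=> /inHP ht; apply: ht => //; apply: agree_restr. Qed.

Lemma decomp t x : inH t ->
  t x = joinn (res t (restr x)) (getv x k + top t (restr x)).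
Proof.
move=> ht; by rewrite -res_restr // -top_restr // -joinn_mod -getv_shift joinn_eta.
Qed.


Lemma compose_in (sg : {perm leaf k}) (F : leaf k -> nat) t :
  (forall x, t x = joinn (sg (restr x)) (getv x k + F (restr x))) -> inH sg ->
  [/\ inH t, res t = sg & forall y, top t y = F y %% p k].
Proof.
move=> ht hs.
have shk : forall x, shiftn t x k = F (restr x) %% p k.
  move=> x; rewrite /shiftn ht getv_joinn_k modnDml.
  have := getv_lt x k => hl.
  have -> : getv x k + F (restr x) + (p k - getv x k) = F (restr x) + p k by lia.
  by rewrite modnDr.
have tin : inH t.
  apply/inHP => x y n; rewrite ltnS leq_eqVlt => /orP [/eqP -> | hn] ag.
    by rewrite !shk (agree_restrE ag).
  rewrite /shiftn !ht !getv_joinn_lo // -(getv_restr x hn) -(getv_restr y hn).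
  apply: (proj1 (inHP sg) hs (restr x) (restr y) n hn) => j hj.
  have hjk := ltn_trans hj hn; rewrite !getv_restr //; exact: ag j hj.
split => //.
  by apply/permP => y; rewrite resE // ht !restr_joinn.
by move=> y; rewrite /top shk restr_joinn.
Qed.

Lemma res_in t : inH t -> inH (res t).
Proof.
move=> ht; apply/inHP => y y' n hn ag.
rewrite /shiftn !resE // !getv_restr // -(getv_joinn_lo y 0 hn) -(getv_joinn_lo y' 0 hn).
apply: (proj1 (inHP t) ht (joinn y 0) (joinn y' 0) n (leqW hn)) => j hj.
have hjk := ltn_trans hj hn; rewrite !getv_joinn_lo //; exact: ag j hj.
Qed.

Lemma H_ext s t : inH s -> inH t -> res s = res t -> (forall y, top s y = top t y) -> s = t.
Proof. by move=> hs ht e1 e2; apply/permP => x; rewrite !decomp // e1 e2. Qed.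

Lemma resM s t : inH s -> inH t ->
  res (s * t)%g = (res s * res t)%g /\
  forall y, top (s * t)%g y = (top s y + top t (res s y)) %% p k.
Proof.
move=> hs ht.
have H2 : inH (res s * res t)%g by rewrite -inHG groupM // inHG res_in.
have H1 : forall x, (s * t)%g x = joinn ((res s * res t)%g (restr x))
     (getv x k + (top s (restr x) + top t (res s (restr x)))).
  move=> x; rewrite permM (decomp (s x) ht) res_restr // getv_shift top_restr //.
  by rewrite -joinn_mod modnDml joinn_mod addnA permM.
by have [_ e1 e2] := @compose_in _ (fun y => top s y + top t (res s y)) _ H1 H2.
Qed.

Lemma fext_props (s : {perm leaf k}) : inH s ->
  [/\ inH (fext s), res (fext s) = s & forall y, top (fext s) y = 0].
Proof.
move=> hs; have [h1 h2 h3] := @compose_in s (fun _ => 0) (fext s) (fun x => etrans (fextE s x) (congr1 _ (esym (addn0 _)))) hs.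
by split => // y; rewrite h3 mod0n.
Qed.

Lemma res1 : res (1 : {perm leaf k.+1})%g = 1%g /\ forall y, top (1 : {perm leaf k.+1})%g y = 0.
Proof.
have H1 : forall x, (1 : {perm leaf k.+1})%g x = joinn ((1 : {perm leaf k})%g (restr x)) (getv x k + 0).
  by move=> x; rewrite !perm1 addn0 joinn_eta.
have H2 : inH (1 : {perm leaf k})%g by rewrite -inHG group1.
have [_ e1 e2] := @compose_in _ (fun _ => 0) _ H1 H2.
by split => // y; rewrite e2 mod0n.
Qed.

Definition LS t := \sum_(y : leaf k) top t y.


Lemma LSM s t : inH s -> inH t -> LS (s * t)%g = LS s + LS t %[mod p k].
Proof.
move=> hs ht; have [_ e] := resM hs ht.
rewrite /LS (eq_bigr (fun y => (top s y + top t (res s y)) %% p k)); last by move=> y _; rewrite e.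
rewrite modn_summ big_split /=.
have -> : \sum_(y : leaf k) top t (res s y) = \sum_(y : leaf k) top t y.
  by symmetry; apply: reindex_inj; exact: perm_inj.
by [].
Qed.

Lemma LS1 : LS (1 : {perm leaf k.+1})%g = 0.
Proof. by rewrite /LS big1 // => y _; rewrite (proj2 res1). Qed.

End Res.

Fixpoint sameS k : {perm leaf k} -> {perm leaf k} -> Prop :=
  match k return {perm leaf k} -> {perm leaf k} -> Prop with
  | 0 => fun _ _ => True
  | k'.+1 => fun s t => LS s = LS t %[mod p k'] /\ sameS (res s) (res t)
  end.

Lemma sameS_refl k (s : {perm leaf k}) : sameS s s.
Proof. by elim: k s => [|k IH] s //=; split. Qed.

Lemma sameS_sym k (s t : {perm leaf k}) : sameS s t -> sameS t s.
Proof. by elim: k s t => [|k IH] s t //= [e1 e2]; split; [rewrite e1 | apply: IH]. Qed.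

Lemma sameS_trans k (s t u : {perm leaf k}) : sameS s t -> sameS t u -> sameS s u.
Proof.
elim: k s t u => [|k IH] s t u //= [e1 e2] [e3 e4]; split; first by rewrite e1 e3.
exact: IH e4.
Qed.

Lemma sameS_M k (s s' t t' : {perm leaf k}) : inH s -> inH s' -> inH t -> inH t' ->
  sameS s s' -> sameS t t' -> sameS (s * t)%g (s' * t')%g.
Proof.
elim: k s s' t t' => [|k IH] s s' t t' //= hs hs' ht ht' [e1 e2] [e3 e4]; split.
  by rewrite !LSM // -modnDm e1 e3 modnDm.
rewrite (proj1 (resM hs ht)) (proj1 (resM hs' ht')).
by apply: IH => //; apply: res_in.
Qed.

Lemma sameS_C k (s t : {perm leaf k}) : inH s -> inH t -> sameS (s * t)%g (t * s)%g.
Proof.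
elim: k s t => [|k IH] s t //= hs ht; split; first by rewrite !LSM // addnC.
rewrite (proj1 (resM hs ht)) (proj1 (resM ht hs)).
by apply: IH => //; apply: res_in.
Qed.

Lemma sameS_fext k (s : {perm leaf k}) : inH s -> (sameS (fext s) 1%g <-> sameS s 1%g).
Proof.
move=> hs; have [h1 h2 h3] := fext_props hs; rewrite /= h2 (proj1 (res1 k)) LS1.
have -> : LS (fext s) = 0 by rewrite /LS big1.
by split => [[]|].
Qed.

Ltac inh := match goal with |- is_true (inH _) => rewrite -inHG; rewrite ?groupM ?groupV ?groupJ //; rewrite ?inHG // end.

Lemma sameS_comm k (a b : {perm leaf k}) : inH a -> inH b -> sameS [~ a, b] 1%g.
Proof.
move=> ha hb; have Ha : a \in HG k by rewrite inHG.
have Hb : b \in HG k by rewrite inHG.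
rewrite commgEl conjgE.
have h1 : sameS (b^-1 * (a * b))%g (b^-1 * (b * a))%g.
  apply: sameS_M; try inh; first exact: sameS_refl.
  apply: sameS_C; inh.
rewrite mulKg in h1.
have h2 : sameS (a^-1 * (b^-1 * (a * b)))%g (a^-1 * a)%g.
  apply: sameS_M; try inh; first exact: sameS_refl.
  done.
by rewrite mulVg in h2.
Qed.

Lemma sameS_conj k (c B : {perm leaf k}) : inH c -> inH B -> sameS (c ^ B)%g c.
Proof.
move=> hc hB; have Hc : c \in HG k by rewrite inHG.
have HB : B \in HG k by rewrite inHG.
rewrite conjgE.
have h1 : sameS (B^-1 * (c * B))%g (B^-1 * (B * c))%g.
  apply: sameS_M; try inh; first exact: sameS_refl.
  apply: sameS_C; inh.
by rewrite mulKg in h1.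
Qed.

Fixpoint emax k : leaf k -> bool :=
  match k return leaf k -> bool with
  | 0 => fun _ => true
  | k'.+1 => fun x => emax (restr x) && (getv x k' == (p k').-1)
  end.

Fixpoint odf k : leaf k -> leaf k :=
  match k return leaf k -> leaf k with
  | 0 => fun x => x
  | k'.+1 => fun x => joinn (odf (restr x)) (getv x k' + emax (restr x))
  end.

Lemma odf_inj k : injective (@odf k).
Proof.
elim: k => [|k IH] //= x1 x2 /joinn_inj [/IH e1].
rewrite e1 => /eqP; rewrite eqn_modDr => /eqP.
rewrite !modn_small ?getv_lt // => e2.
by rewrite -(joinn_eta x1) -(joinn_eta x2) e1 e2.
Qed.

Definition od k : {perm leaf k} := perm (@odf_inj k).

Lemma odS k x : od k.+1 x = joinn (od k (restr x)) (getv x k + emax (restr x)).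
Proof. by rewrite !permE. Qed.

Lemma od_props k : inH (od k.+1) /\ res (od k.+1) = od k /\ forall y, top (od k.+1) y = emax y %% p k.
Proof.
elim: k => [|k [IH _]].
  have hs : inH (od 0) by apply/inHP.
  by have [h1 h2 h3] := @compose_in 0 (od 0) (fun y => emax y) (od 1) (@odS 0) hs.
by have [h1 h2 h3] := @compose_in k.+1 (od k.+1) (fun y => emax y) (od k.+2) (@odS k.+1) IH.
Qed.

Lemma od_in k : inH (od k).
Proof. case: k => [|k]; [by apply/inHP | exact: (proj1 (od_props k))]. Qed.

Fixpoint NN k := match k with 0 => 1 | k'.+1 => NN k' * p k' end.
Fixpoint num k : leaf k -> nat :=
  match k return leaf k -> nat with
  | 0 => fun _ => 0
  | k'.+1 => fun x => num (restr x) + getv x k' * NN k'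
  end.

Lemma NN_gt0 k : 0 < NN k.
Proof. by elim: k => [|k IH] //=; rewrite muln_gt0 IH hp0. Qed.

Lemma num_lt k (x : leaf k) : num x < NN k.
Proof.
elim: k x => [|k IH] x //=.
have h1 := IH (restr x); have h2 := getv_lt x k.
nia.
Qed.

Lemma mixed_inj a a' c c' N : a < N -> a' < N -> a + c * N = a' + c' * N -> a = a' /\ c = c'.
Proof.
move=> ha ha' e.
have e1 : a = a'.
  by have := congr1 (modn^~ N) e; rewrite /= ![_ + _ * N]addnC !modnMDl !modn_small.
split => //; move: e; rewrite e1 => /eqP; rewrite eqn_add2l eqn_mul2r => /orP [/eqP hN|/eqP //].
by move: ha; rewrite hN.
Qed.

Lemma num_inj k : injective (@num k).
Proof.
elim: k => [|k IH] x1 x2 /=.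
  by move=> _; apply: leafP.
move/(mixed_inj (num_lt _) (num_lt _)) => [/IH e1 e2].
by rewrite -(joinn_eta x1) -(joinn_eta x2) e1 e2.
Qed.

Lemma emax_num k (y : leaf k) : emax y = ((num y).+1 == NN k).
Proof.
elim: k y => [|k IH] y //=.
rewrite IH; have h1 := num_lt (restr y); have h2 := getv_lt y k; have h3 := NN_gt0 k.
apply/idP/idP.
  move=> /andP [/eqP e1 /eqP e2]; apply/eqP; have hp := prednK (hp0 k).
  rewrite -e1 -hp -e2; nia.
move=> /eqP e; apply/andP.
have hc : getv y k = (p k).-1.
  apply/eqP; rewrite eqn_leq -ltnS prednK ?hp0 // h2 /=.
  nia.
split; apply/eqP => //; move: e; rewrite hc.
rewrite -{2}(prednK (hp0 k)) mulnS; lia.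
Qed.

Lemma num_od k (x : leaf k) : num (od k x) = (num x).+1 %% NN k.
Proof.
elim: k x => [|k IH] x /=; first by rewrite modn1.
rewrite odS restr_joinn IH getv_joinn_k emax_num.
have h1 := num_lt (restr x); have h2 := getv_lt x k; have h3 := NN_gt0 k.
case: eqP => [e|ne] /=.
  rewrite e modnn add0n.
  have -> : (num (restr x) + getv x k * NN k).+1 = (getv x k + 1) * NN k by nia.
  by rewrite muln_modl // [NN k * _]mulnC.
have hr : (num (restr x)).+1 < NN k by rewrite ltn_neqAle h1 andbT; apply/eqP.
rewrite addn0 (modn_small hr) (modn_small h2) modn_small //; nia.
Qed.

Lemma num_zero k : num (mk k (fun _ => 0)) = 0.
Proof.
elim: k => [|k IH] //=.
have -> : restr (mk k.+1 (fun _ => 0)) = mk k (fun _ => 0).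
  by apply: leafP => n hn; rewrite getv_restr // !getv_mk // ltnS ltnW.
by rewrite IH getv_mk // mod0n.
Qed.

Lemma modDMr a b q : (a + q * b) %% q = a %% q.
Proof. by rewrite addnC mulnC modnMDl. Qed.

Lemma solv k q (A C : leaf k -> nat) : 0 < q ->
  \sum_(y : leaf k) A y = \sum_(y : leaf k) C y %[mod q] ->
  exists phi : leaf k -> nat, forall y, phi y + C y = A y + phi (od k y) %[mod q].
Proof.
case: q => // r _ hs.
set N := NN k; set z0 := mk k (fun _ => 0).
pose Y j := iter j (od k) z0.
have numY : forall j, num (Y j) = j %% N.
  elim=> [|j IH]; first by rewrite /Y /= num_zero mod0n.
  by rewrite /Y iterS -/(Y j) num_od IH -addn1 modnDml addn1.
have YnumE : forall y, Y (num y) = y.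
  by move=> y; apply: num_inj; rewrite numY modn_small // num_lt.
pose W y := C y + r * A y.
exists (fun y => \sum_(0 <= j < num y) W (Y j)) => y.
set m := num y.
have Yy : Y m = y := YnumE y.
have odY : od k y = Y m.+1 by rewrite /Y iterS -/(Y m) Yy.
have hm : m < N := num_lt y.
case: (ltngtP m.+1 N) => [hlt | hgt | heq].
- have -> : num (od k y) = m.+1 by rewrite num_od modn_small.
  rewrite big_nat_recr //= Yy /W.
  have -> : A y + (\sum_(0 <= j < m) (C (Y j) + r * A (Y j)) + (C y + r * A y))
      = (\sum_(0 <= j < m) (C (Y j) + r * A (Y j)) + C y) + r.+1 * A y by rewrite mulSn; lia.
  by rewrite modDMr.
- lia.
have -> : num (od k y) = 0 by rewrite num_od heq modnn.
rewrite (big_geq (leqnn 0)) addn0.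
have tot : \sum_(0 <= j < m) W (Y j) + W y = \sum_(y : leaf k) W y.
  rewrite -{1}Yy -big_nat_recr //= heq big_mkord.
  have bijY : bijective (fun j : 'I_N => Y j).
    apply: inj_card_bij.
      move=> i j /(congr1 (@num k)); rewrite !numY !modn_small // => e.
      exact: val_inj.
    rewrite card_ord.
    have fi : injective (fun y : leaf k => (Ordinal (num_lt y) : 'I_N)).
      by move=> a b /(congr1 val) /num_inj.
    by have := @leq_card _ _ _ fi; rewrite card_ord.
  by rewrite (reindex (fun j : 'I_N => Y j)) //; exact: onW_bij.
have e1 : \sum_(0 <= j < m) W (Y j) + C y + r * A y
    = \sum_(y : leaf k) C y + r * \sum_(y : leaf k) A y.
  by rewrite -addnA -/(W y) tot /W big_split /= big_distrr.
rewrite -(modDMr _ (A y) r.+1) mulSn.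
have -> : \sum_(0 <= j < m) W (Y j) + C y + (A y + r * A y)
     = \sum_(y : leaf k) C y + (r * \sum_(y : leaf k) A y + A y) by lia.
rewrite -modnDml -hs modnDml.
have -> : \sum_(y : leaf k) A y + (r * \sum_(y : leaf k) A y + A y)
     = A y + r.+1 * \sum_(y : leaf k) A y by rewrite mulSn; lia.
by rewrite modDMr.
Qed.

Lemma inH1 k : inH (1 : {perm leaf k})%g.
Proof. by rewrite -inHG group1. Qed.

Lemma conj_od k (c : {perm leaf k}) : inH c -> sameS c (od k) ->
  exists b, inH b /\ c = (od k ^ b)%g.
Proof.
elim: k c => [|k IH] c hc hS.
  exists 1%g; split; first exact: inH1.
  by rewrite conjg1; apply/permP => x; apply: leafP => n; rewrite ltn0.
have [odin [odres odtop]] := od_props k.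
case: hS => hLS hres.
rewrite odres in hres.
have [b' [hb' eb']] := IH (res c) (res_in hc) hres.
set B := fext b'.
have [hB hresB htopB] := fext_props hb'.
have HB : B \in HG k.+1 by rewrite inHG.
have Hc : c \in HG k.+1 by rewrite inHG.
have Hb' : b' \in HG k by rewrite inHG.
have hBi : inH (B^-1)%g by inh.
set c' := (c ^ B^-1)%g.
have hc' : inH c' by rewrite /c' -inHG groupJ ?groupV.
have resBi : res (B^-1)%g = (b'^-1)%g.
  have [e _] := resM hB hBi.
  rewrite mulgV (proj1 (res1 k)) hresB in e.
  by apply: (mulgI b'); rewrite -e mulgV.
have rc' : res c' = od k.
  have hcBi : inH (c * B^-1)%g by inh.
  rewrite /c' conjgE invgK (proj1 (resM hB hcBi)) (proj1 (resM hc hBi)) hresB eb' resBi conjgE.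
  by rewrite !mulgA mulgV mul1g mulgK.
have hLS' : LS c' = LS (od k.+1) %[mod p k].
  by have [e _] := sameS_conj hc hBi; rewrite e hLS.
have [phi hphi] := @solv k (p k) (top (od k.+1)) (top c') (hp0 k) (esym hLS').
have dinj : injective (fun x : leaf k.+1 => joinn (restr x) (getv x k + phi (restr x))).
  move=> x1 x2 /joinn_inj [e1 /eqP]; rewrite e1 eqn_modDr => /eqP.
  rewrite !modn_small ?getv_lt // => e2.
  by rewrite -(joinn_eta x1) -(joinn_eta x2) e1 e2.
set d := perm dinj.
have [hd resd topd] := @compose_in k 1%g phi d (fun x => etrans (permE dinj x) (congr1 (fun z => joinn z _) (esym (perm1 _)))) (inH1 k).
have Hd : d \in HG k.+1 by rewrite inHG.
have Ho : od k.+1 \in HG k.+1 by rewrite inHG.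
have Hc' : c' \in HG k.+1 by rewrite inHG.
have key : (d * c')%g = (od k.+1 * d)%g.
  apply: H_ext; try inh.
    by rewrite (proj1 (resM hd hc')) (proj1 (resM odin hd)) resd odres rc' mul1g mulg1.
  move=> y; rewrite (proj2 (resM hd hc')) (proj2 (resM odin hd)) resd odres perm1 !topd.
  by rewrite modnDml modnDmr hphi.
have ec' : c' = (od k.+1 ^ d)%g by rewrite conjgE -key mulKg.
exists (d * B)%g; split; first by inh.
by rewrite conjgM -ec' /c' conjgKV.
Qed.

Lemma good_comm k (g : {perm leaf k}) : inH g -> sameS g 1%g ->
  exists a b, [/\ inH a, inH b & g = [~ a, b]%g].
Proof.
move=> hg hS; have Hg : g \in HG k by rewrite inHG.
have Ho : od k \in HG k by rewrite inHG od_in.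
have hc : inH (od k * g)%g by inh.
have hS' : sameS (od k * g)%g (od k).
  by have := sameS_M (od_in k) (od_in k) hg (inH1 k) (sameS_refl _) hS; rewrite mulg1.
have [b [hb eb]] := conj_od hc hS'.
exists (od k), b; split => //; first exact: od_in.
by rewrite commgEl -eb mulKg.
Qed.

Lemma fiter_props d k (s : {perm leaf k}) : inH s ->
  inH (fiter d s) /\ (sameS (fiter d s) 1%g <-> sameS s 1%g).
Proof.
move=> hs; elim: d => [|d [IH1 IH2]] /=; first by split.
have [h1 _ _] := fext_props IH1; split => //.
exact: iff_trans (sameS_fext IH1) IH2.
Qed.

Lemma fiter1 d k : fiter d (1 : {perm leaf k})%g = 1%g.
Proof.
elim: d => [|d IH] //=; rewrite IH; apply/permP => x.
by rewrite fextE !perm1 joinn_eta.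
Qed.

Lemma lift_toP (Q : forall n, {perm leaf n} -> Prop) k m (s : {perm leaf k}) : k <= m ->
  Q m (lift_to m (Tagged (fun n => {perm leaf n}) s)) <-> Q (m - k + k) (fiter (m - k) s).
Proof.
move=> h; rewrite /lift_to /=.
move: (fiter (m - k) s); move: (subnK h); move: (m - k + k) => n e; subst n.
by move=> t; rewrite tagged_asE.
Qed.

Lemma lift_to_self k (s : {perm leaf k}) : lift_to k (Tagged (fun n => {perm leaf n}) s) = s.
Proof.
rewrite /lift_to /=; move: (subnn k); move: (k - k) => d e; subst d.
by rewrite tagged_asE.
Qed.

Lemma lift_one m : lift_to m (lim_one p) = 1%g.
Proof.
apply: (proj2 (@lift_toP (fun n t => t = 1%g) 0 m 1%g (leq0n m))).
exact: fiter1.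
Qed.

Definition goodr (u : rep p) := inH (tagged u) /\ sameS (tagged u) 1%g.

Lemma lift_good (u : rep p) m : goodr u -> tag u <= m ->
  inH (lift_to m u) /\ sameS (lift_to m u) 1%g.
Proof.
case: u => k s /= [hs hS] h.
apply: (proj2 (@lift_toP (fun n t => inH t /\ sameS t 1%g) k m s h)).
have [h1 h2] := fiter_props (m - k) hs; split => //; exact/h2.
Qed.

Lemma lift_inH (u : rep p) m : inH (tagged u) -> tag u <= m -> inH (lift_to m u).
Proof.
case: u => k s /= hs h.
apply: (proj2 (@lift_toP (fun n t => inH t) k m s h)).
exact: (proj1 (fiter_props (m - k) hs)).
Qed.

Lemma prod_good (l : seq (rep p * rep p)) :
  foldr (fun a P => [/\ in_lim a.1, in_lim a.2 & P]) True l ->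
  goodr (prod_comms (@lim_mul p) (lim_one p) (@lim_comm p) l).
Proof.
elim: l => [|[a b] l IH] /=.
  by move=> _; split; [exact: inH1 | exact: sameS_refl].
move=> [ha hb /IH hl].
set C := lim_comm a b.
have gC : goodr C.
  rewrite /C /lim_comm /goodr /=.
  have h1 := lift_inH ha (leq_maxl (tag a) (tag b)).
  have h2 := lift_inH hb (leq_maxr (tag a) (tag b)).
  split; last exact: sameS_comm.
  by rewrite -inHG groupR // inHG.
rewrite /lim_mul /goodr /=.
have [h1 h2] := lift_good gC (leq_maxl (tag C) (tag (prod_comms (@lim_mul p) (lim_one p) (@lim_comm p) l))).
have [h3 h4] := lift_good hl (leq_maxr (tag C) (tag (prod_comms (@lim_mul p) (lim_one p) (@lim_comm p) l))).
split; first by rewrite -inHG groupM // inHG.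
by have := sameS_M h1 (inH1 _) h3 (inH1 _) h2 h4; rewrite mulg1.
Qed.

Lemma single_comm k (a b : {perm leaf k}) : inH a -> inH b ->
  is_prod_of_comms (@in_lim p) (@lim_eq p) (@lim_mul p) (lim_one p) (@lim_comm p)
    (Tagged (fun n => {perm leaf n}) [~ a, b]%g) 1.
Proof.
move=> ha hb.
exists [:: (Tagged (fun n => {perm leaf n}) a, Tagged (fun n => {perm leaf n}) b)].
split => //; split => //=.
have e1 : lim_comm (Tagged (fun n => {perm leaf n}) a) (Tagged (fun n => {perm leaf n}) b)
   = Tagged (fun n => {perm leaf n}) [~ a, b]%g.
  by rewrite /lim_comm /lvl /= maxnn !lift_to_self.
have e2 : forall c : {perm leaf k}, lim_mul (Tagged (fun n => {perm leaf n}) c) (lim_one p)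
   = Tagged (fun n => {perm leaf n}) c.
  by move=> c; rewrite /lim_mul /lvl /= maxn0 lift_to_self lift_one mulg1.
by rewrite e1 e2.
Qed.

Lemma topperm_ex k (phi : leaf k -> nat) :
  exists t : {perm leaf k.+1}, forall x, t x = joinn (restr x) (getv x k + phi (restr x)).
Proof.
have dinj : injective (fun x : leaf k.+1 => joinn (restr x) (getv x k + phi (restr x))).
  move=> x1 x2 /joinn_inj [e1 /eqP]; rewrite e1 eqn_modDr => /eqP.
  rewrite !modn_small ?getv_lt // => e2.
  by rewrite -(joinn_eta x1) -(joinn_eta x2) e1 e2.
by exists (perm dinj); exact: permE.
Qed.

Lemma nontriv : 1 < p 0 -> 1 < p 1 ->
  exists b : {perm leaf 2}, inH b /\ [~ od 2, b]%g != 1%g.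
Proof.
move=> h0 h1.
have [b hb] := @topperm_ex 1 (fun y => nat_of_bool (getv y 0 == 0)).
have hb' : forall x, b x = joinn ((1 : {perm leaf 1})%g (restr x)) (getv x 1 + nat_of_bool (getv (restr x) 0 == 0)).
  by move=> x; rewrite perm1 hb.
have [hbin _ _] := @compose_in 1 1%g (fun y => nat_of_bool (getv y 0 == 0)) b hb' (inH1 1).
exists b; split => //.
apply/negP => /commgP ecomm.
set z := mk 2 (fun _ => 0).
have := congr1 (fun s : {perm leaf 2} => getv (s z) 1) ecomm; rewrite /= !permM.
have gz1 : getv z 1 = 0 by rewrite /z getv_mk // mod0n.
have gz0 : getv (restr z) 0 = 0 by rewrite getv_restr // /z getv_mk // mod0n.
have hne : (0 == (p 0).-1) = false by apply/eqP; lia.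
have em : emax (restr z) = false by rewrite /= gz0 hne.
have o1 : getv (od 1 (restr z)) 0 = 1.
  by rewrite odS getv_joinn_k gz0 /= modn_small.
rewrite hb odS !getv_joinn_k restr_joinn gz1 em o1 /=.
rewrite odS getv_joinn_k hb restr_joinn getv_joinn_k gz1 gz0 em /=.
by rewrite !modn_small.
Qed.

End Dev.

Theorem mainTheorem7 (p : nat -> nat) (hp : forall i, 2 <= p i) :
  commutator_width_is (@in_lim p) (@lim_eq p) (@lim_mul p) (@lim_one p)
                      (@lim_comm p) 1.
Proof.
have hp0 : forall i, 0 < p i by move=> i; apply: leq_trans (hp i).
split.
  move=> [k g] [hg [m [l [_ [hl he]]]]]; rewrite /in_lim /= in hg.
  have gP := prod_good hp0 hl.
  set P := prod_comms _ _ _ l in gP he.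
  have hS : @sameS p hp0 k g 1%g.
    have [_ h2] := lift_good gP (leq_maxr k (tag P)).
    move: he; rewrite /lim_eq /lvl /= => he.
    rewrite -he in h2.
    have h3 := proj1 (@lift_toP p (fun n t => @sameS p hp0 n t 1%g) k (maxn k (tag P)) g (leq_maxl k (tag P))) h2.
    exact: (proj1 (proj2 (fiter_props hp0 (maxn k (tag P) - k) hg)) h3).
  have [a [b [ha hb ->]]] := good_comm hg hS.
  exists 1; split => //; exact: single_comm.
have [b [hb hne]] := nontriv hp0 (hp 0) (hp 1).
have ho := od_in hp0 2.
exists (Tagged (fun n => {perm leaf p n}) [~ od hp0 2, b]%g); split.
  split; first by rewrite /in_lim /= -inHG groupR // inHG.
  by exists 1; exact: single_comm.
move=> m; rewrite ltnS leqn0 => /eqP -> [l [/size0nil -> [_ he]]].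
move: he; rewrite /lim_eq /lvl /= lift_to_self (lift_one hp0) => e.
by rewrite e eqxx in hne.
Qed.
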